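(* Let $\widetilde{\mathsf{Op}}$ be the GPT associated with an operational theory. Then $\widetilde{\mathsf{Op}}$ is tomographically local if and only if, for every system $A$, every linearly independent spanning set of states $\{\widetilde P^A_j\}_{j=1}^{m^A}$ and every linearly independent spanning set of effects $\{\widetilde E^A_i\}_{i=1}^{m^A}$, the $m^A\times m^A$ matrix $\mathbf{N}_{\widetilde{\mathbb 1}_A}$ with entries $(\mathbf{N}_{\widetilde{\mathbb 1}_A})_{j,i}:=\widetilde E^A_j\circ\widetilde P^A_i$ is invertible and, writing $\mathbf{M}_{\widetilde{\mathbb 1}_A}:=\mathbf{N}_{\widetilde{\mathbb 1}_A}^{-1}$, the identity process on $A$ decomposes as $$\widetilde{\mathbb 1}_A=\sum_{i,j=1}^{m^A}(\mathbf{M}_{\widetilde{\mathbb 1}_A})_{j,i}\;\widetilde P^A_j\circ\widetilde E^A_i .$$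
   Context: A process theory consists of systems (closed under composition $\otimes$, with trivial system $I$) and processes, closed under sequential composition $\circ$ and parallel composition $\otimes$, with identities; processes $I\to A$ are states, $A\to I$ effects. An operational theory is a process theory of procedures with a probability rule $p$ assigning each closed diagram a value in $[0,1]$; two procedures of the same type are operationally equivalent if they yield equal probabilities when plugged into any tester $\tau=(s,e,W)$ ($s:I\to A\otimes W$, $e:B\otimes W\to I$, yielding $e\circ(T\otimes\mathrm{id}_W)\circ s$); finitely many testers suffice for each type. The associated GPT $\widetilde{\mathsf{Op}}$ has as processes the equivalence classes, composed via representatives; closed diagrams are real numbers (probabilities); each class of type $A\to B$ is identified with its vector of probabilities on a finite tomographically complete set of testers, so linear combinations of processes of a given type are elements of a finite-dimensional real vector space, and sequential and parallel composition extend bilinearly to these linear combinations. For a system $A$, the states of $A$ span a finite-dimensional vector space of dimension $m^A$ and the effects on $A$ span a space of the same dimension; a ''linearly independent spanning set'' of states (effects) is a basis of this span consisting of states (effects). For an effect $E$ on $A$ and a state $P$ of $B$, $P\circ E$ denotes the process $A\to B$ obtained by sequential composition through the trivial system. $\widetilde{\mathsf{Op}}$ is tomographically local if any two processes of the same type (possibly with several input systems $A_1,\dots$ and output systems $B_1,\dots$) that give equal probabilities when composed with all products of states on their inputs and all products of effects on their outputs are equal. *)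

(* Defs.v *)
From HB Require Import structures.
From mathcomp Require Import all_boot all_order all_algebra.
From mathcomp Require Import reals.
Set Implicit Arguments.
Unset Strict Implicit.
Unset Printing Implicit Defensive.
Import Order.TTheory GRing.Theory Num.Theory.
Local Open Scope ring_scope.

(* Systems are finite lists of elementary systems (strict monoid):
   trivial system I = [::], composite A (x) B = A ++ B. *)

Definition castLin (Atom : Type) (R : realType)
  (Lin : seq Atom -> seq Atom -> vectType R)
  (A A' B B' : seq Atom) (eA : A = A') (eB : B = B') (f : Lin A B) : Lin A' B' :=
  match eA in _ = X return Lin X B' with
  | erefl => match eB in _ = Y return Lin A Y with erefl => f end
  end.

(* The GPT associated with an operational theory, axiomatized through the
   structure it has: for each pair of systems, the finite-dimensional real
   vector space Lin A B of linear combinations of (equivalence classes of)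
   processes A -> B; a predicate [gpt_proc] singling out the actual processes;
   bilinear sequential / parallel composition; identities; closed diagrams
   are reals (via the linear iso [gpt_tor]); every element is determined by its
   values on testers (s, e, W). *)
Record GPT (R : realType) := MkGPT {
  Atom : Type;
  Lin : seq Atom -> seq Atom -> vectType R;
  gpt_proc : forall A B, Lin A B -> Prop;
  gpt_comp : forall A B C, Lin B C -> Lin A B -> Lin A C;
  gpt_par : forall A B C D, Lin A B -> Lin C D -> Lin (A ++ C) (B ++ D);
  gpt_id : forall A, Lin A A;
  gpt_tor : Lin [::] [::] -> R;
  tor_lin : forall (a : R) (x y : Lin [::] [::]), gpt_tor (a *: x + y) = a * gpt_tor x + gpt_tor y;
  tor_inj : injective gpt_tor;
  tor_id : gpt_tor (gpt_id [::]) = 1;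
  tor_proc : forall s : Lin [::] [::], gpt_proc s -> 0 <= gpt_tor s <= 1;
  comp_linl : forall A B C (a : R) (f g : Lin B C) (h : Lin A B),
      gpt_comp (a *: f + g) h = a *: gpt_comp f h + gpt_comp g h;
  comp_linr : forall A B C (a : R) (f : Lin B C) (g h : Lin A B),
      gpt_comp f (a *: g + h) = a *: gpt_comp f g + gpt_comp f h;
  par_linl : forall A B C D (a : R) (f g : Lin A B) (h : Lin C D),
      gpt_par (a *: f + g) h = a *: gpt_par f h + gpt_par g h;
  par_linr : forall A B C D (a : R) (f : Lin A B) (g h : Lin C D),
      gpt_par f (a *: g + h) = a *: gpt_par f g + gpt_par f h;
  compA : forall A B C D (h : Lin C D) (g : Lin B C) (f : Lin A B),
      gpt_comp h (gpt_comp g f) = gpt_comp (gpt_comp h g) f;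
  comp_idl : forall A B (f : Lin A B), gpt_comp (gpt_id B) f = f;
  comp_idr : forall A B (f : Lin A B), gpt_comp f (gpt_id A) = f;
  interchange : forall A B C D E F (f : Lin B C) (f' : Lin A B)
      (g : Lin E F) (g' : Lin D E),
      gpt_comp (gpt_par f g) (gpt_par f' g') = gpt_par (gpt_comp f f') (gpt_comp g g');
  par_id : forall A B, gpt_par (gpt_id A) (gpt_id B) = gpt_id (A ++ B);
  par_idl : forall A B (f : Lin A B), gpt_par (gpt_id [::]) f = f;
  par_idr : forall A B (f : Lin A B),
      gpt_par f (gpt_id [::]) = @castLin Atom R Lin _ _ _ _ (esym (cats0 A)) (esym (cats0 B)) f;
  proc_id : forall A, gpt_proc (gpt_id A);
  proc_comp : forall A B C (g : Lin B C) (f : Lin A B),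
      gpt_proc g -> gpt_proc f -> gpt_proc (gpt_comp g f);
  proc_par : forall A B C D (f : Lin A B) (g : Lin C D),
      gpt_proc f -> gpt_proc g -> gpt_proc (gpt_par f g);
  proc_span : forall A B (v : Lin A B),
      exists s : seq (Lin A B), (forall x, x \in s -> gpt_proc x) /\ (v \in <<s>>)%VS;
  tester_sep : forall A B (v : Lin A B),
      (forall (W : seq Atom) (s : Lin [::] (A ++ W)) (e : Lin (B ++ W) [::]),
          gpt_proc s -> gpt_proc e -> gpt_tor (gpt_comp e (gpt_comp (gpt_par v (gpt_id W)) s)) = 0) ->
      v = 0
}.

Arguments Lin {R} _ _ _.
Arguments gpt_proc {R} _ {A B} _.
Arguments gpt_comp {R} _ {A B C} _ _.
Arguments gpt_par {R} _ {A B C D} _ _.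
Arguments gpt_id {R} _ _.
Arguments gpt_tor {R} _ _.

Section Defs.
Variables (R : realType) (G : GPT R).

Definition state (A : seq (Atom G)) (p : Lin G [::] A) : Prop := gpt_proc G p.
Definition effect (A : seq (Atom G)) (e : Lin G A [::]) : Prop := gpt_proc G e.

Unset Implicit Arguments.
Inductive prod_state : forall As : seq (seq (Atom G)),
    Lin G [::] (flatten As) -> Prop :=
| ps_nil : prod_state [::] (gpt_id G [::])
| ps_cons (A : seq (Atom G)) (As : seq (seq (Atom G)))
    (p : Lin G [::] A) (v : Lin G [::] (flatten As)) :
    state p -> prod_state As v -> prod_state (A :: As) (gpt_par G p v).

Inductive prod_effect : forall Bs : seq (seq (Atom G)),
    Lin G (flatten Bs) [::] -> Prop :=
| pe_nil : prod_effect [::] (gpt_id G [::])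
| pe_cons (B : seq (Atom G)) (Bs : seq (seq (Atom G)))
    (e : Lin G B [::]) (v : Lin G (flatten Bs) [::]) :
    effect e -> prod_effect Bs v -> prod_effect (B :: Bs) (gpt_par G e v).

Set Implicit Arguments.
Arguments prod_state {As} _.
Arguments prod_effect {Bs} _.

Definition tomographically_local : Prop :=
  forall (As Bs : seq (seq (Atom G))) (f g : Lin G (flatten As) (flatten Bs)),
    (forall (ps : Lin G [::] (flatten As)) (es : Lin G (flatten Bs) [::]),
        prod_state ps -> prod_effect es ->
        gpt_tor G (gpt_comp G es (gpt_comp G f ps)) = gpt_tor G (gpt_comp G es (gpt_comp G g ps))) ->
    f = g.

Definition states_basis (A : seq (Atom G)) n (P : n.-tuple (Lin G [::] A)) : Prop :=
  (forall j, state (tnth P j)) /\ free P /\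
  (forall p : Lin G [::] A, state p -> (p \in <<P>>)%VS).

Definition effects_basis (A : seq (Atom G)) n (E : n.-tuple (Lin G A [::])) : Prop :=
  (forall i, effect (tnth E i)) /\ free E /\
  (forall e : Lin G A [::], effect e -> (e \in <<E>>)%VS).

Definition Nmx (A : seq (Atom G)) n (P : n.-tuple (Lin G [::] A))
    (E : n.-tuple (Lin G A [::])) : 'M[R]_n :=
  \matrix_(j < n, i < n) gpt_tor G (gpt_comp G (tnth E j) (tnth P i)).

End Defs.

(* Main.v *)
Require Import Defs.
From HB Require Import structures.
From mathcomp Require Import all_boot all_order all_algebra.
From mathcomp Require Import reals.
From Stdlib Require Import ProofIrrelevance.
Import GRing.Theory.
Set Implicit Arguments.
Unset Strict Implicit.
Local Open Scope ring_scope.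

Section Aux.
Variables (R : realType) (G : GPT R).
Local Notation L := (Lin G).
Local Notation comp := (gpt_comp G).
Local Notation par := (gpt_par G).
Local Notation idd := (gpt_id G).
Local Notation tor := (gpt_tor G).

Lemma comp0r A B C (f : L B C) : comp f (0 : L A B) = 0.
Proof.
have := comp_linr (-1) f (0 : L A B) 0.
by rewrite scaler0 addr0 scaleN1r addNr.
Qed.
Lemma comp0l A B C (f : L A B) : comp (0 : L B C) f = 0.
Proof.
have := comp_linl (-1) (0 : L B C) 0 f.
by rewrite scaler0 addr0 scaleN1r addNr.
Qed.
Lemma compDr A B C (f : L B C) (g h : L A B) : comp f (g + h) = comp f g + comp f h.
Proof. by have := comp_linr 1 f g h; rewrite !scale1r. Qed.
Lemma compDl A B C (f g : L B C) (h : L A B) : comp (f + g) h = comp f h + comp g h.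
Proof. by have := comp_linl 1 f g h; rewrite !scale1r. Qed.
Lemma compZr A B C a (f : L B C) (g : L A B) : comp f (a *: g) = a *: comp f g.
Proof. by have := comp_linr a f g 0; rewrite !addr0 comp0r addr0. Qed.
Lemma compZl A B C a (f : L B C) (g : L A B) : comp (a *: f) g = a *: comp f g.
Proof. by have := comp_linl a f 0 g; rewrite !addr0 comp0l addr0. Qed.
Lemma par0r A B C D (f : L A B) : par f (0 : L C D) = 0.
Proof.
have := par_linr (-1) f (0 : L C D) 0.
by rewrite scaler0 addr0 scaleN1r addNr.
Qed.
Lemma par0l A B C D (f : L C D) : par (0 : L A B) f = 0.
Proof.
have := par_linl (-1) (0 : L A B) 0 f.
by rewrite scaler0 addr0 scaleN1r addNr.
Qed.
Lemma parDr A B C D (f : L A B) (g h : L C D) : par f (g + h) = par f g + par f h.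
Proof. by have := par_linr 1 f g h; rewrite !scale1r. Qed.
Lemma parDl A B C D (f g : L A B) (h : L C D) : par (f + g) h = par f h + par g h.
Proof. by have := par_linl 1 f g h; rewrite !scale1r. Qed.
Lemma parZr A B C D a (f : L A B) (g : L C D) : par f (a *: g) = a *: par f g.
Proof. by have := par_linr a f g 0; rewrite !addr0 par0r addr0. Qed.
Lemma parZl A B C D a (f : L A B) (g : L C D) : par (a *: f) g = a *: par f g.
Proof. by have := par_linl a f 0 g; rewrite !addr0 par0l addr0. Qed.
Lemma tor0 : tor 0 = 0.
Proof. by have := tor_lin (-1) (0 : L [::] [::]) 0; rewrite scaler0 addr0 mulN1r addNr. Qed.
Lemma torD x y : tor (x + y) = tor x + tor y.
Proof. by have := tor_lin 1 x y; rewrite scale1r mul1r. Qed.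
Lemma torZ a x : tor (a *: x) = a * tor x.
Proof. by have := tor_lin a x 0; rewrite !addr0 tor0 addr0. Qed.

Lemma comp_sumr A B C (f : L B C) I (r : seq I) (P : pred I) (F : I -> L A B) :
  comp f (\sum_(i <- r | P i) F i) = \sum_(i <- r | P i) comp f (F i).
Proof. exact: (big_morph _ (compDr f) (comp0r _ f)). Qed.
Lemma comp_suml A B C (h : L A B) I (r : seq I) (P : pred I) (F : I -> L B C) :
  comp (\sum_(i <- r | P i) F i) h = \sum_(i <- r | P i) comp (F i) h.
Proof. exact: (big_morph (fun f => comp f h) (fun f g => compDl f g h) (comp0l _ h)). Qed.
Lemma par_sumr A B C D (f : L A B) I (r : seq I) (P : pred I) (F : I -> L C D) :
  par f (\sum_(i <- r | P i) F i) = \sum_(i <- r | P i) par f (F i).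
Proof. exact: (big_morph _ (parDr f) (par0r _ _ f)). Qed.
Lemma par_suml A B C D (h : L C D) I (r : seq I) (P : pred I) (F : I -> L A B) :
  par (\sum_(i <- r | P i) F i) h = \sum_(i <- r | P i) par (F i) h.
Proof. exact: (big_morph (fun f => par f h) (fun f g => parDl f g h) (par0l _ _ h)). Qed.
Lemma tor_sum I (r : seq I) (P : pred I) (F : I -> L [::] [::]) :
  tor (\sum_(i <- r | P i) F i) = \sum_(i <- r | P i) tor (F i).
Proof. exact: (big_morph _ torD tor0). Qed.

Lemma tor_comp (x y : L [::] [::]) : tor (comp x y) = tor x * tor y.
Proof.
have ex : forall z : L [::] [::], z = tor z *: idd [::].
  by move=> z; apply: tor_inj; rewrite torZ tor_id mulr1.
rewrite [x]ex [y]ex compZl compZr comp_idl torZ torZ tor_id mulr1 -!ex.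
done.
Qed.

Lemma castLin_inj A A' B B' (eA : A = A') (eB : B = B') (f g : L A B) :
  castLin eA eB f = castLin eA eB g -> f = g.
Proof. by case: A' / eA; case: B' / eB. Qed.

Lemma proc_cast A A' B B' (eA : A = A') (eB : B = B') (f : L A B) :
  gpt_proc G f -> gpt_proc G (castLin eA eB f).
Proof. by case: A' / eA; case: B' / eB. Qed.

Lemma comp_cast_eff A A' (eA : A = A') (e : L A [::]) (q : L [::] A') :
  comp (castLin eA (erefl [::]) e) q = comp e (castLin (erefl [::]) (esym eA) q).
Proof. by case: A' / eA q. Qed.

Lemma comp_cast_st A A' (eA : A = A') (x : L A' [::]) (p : L [::] A) :
  comp x (castLin (erefl [::]) eA p) = comp (castLin (esym eA) (erefl [::]) x) p.
Proof. by case: A' / eA x. Qed.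

Lemma eff_nondeg A (e : L A [::]) :
  (forall p : L [::] A, state p -> tor (comp e p) = 0) -> e = 0.
Proof.
move=> H; apply: tester_sep => W s x ps px.
have E1 : comp x (par e (idd W)) = par e x.
  by rewrite -{1}(par_idl x) (Defs.interchange (idd [::]) e x (idd W)) comp_idl comp_idr.
have E2 : par e x = comp (par e (idd [::])) (par (idd A) x).
  by rewrite Defs.interchange comp_idl comp_idr.
rewrite Defs.compA E1 E2 -Defs.compA par_idr.
have -> : esym (cats0 [::]) = erefl [::] :> ([::] = [::] :> seq (Atom G)).
  by apply: proof_irrelevance.
rewrite comp_cast_eff; apply: H.
apply: proc_cast; apply: proc_comp => //; apply: proc_par => //; exact: proc_id.
Qed.

Lemma st_nondeg A (p : L [::] A) :
  (forall e : L A [::], effect e -> tor (comp e p) = 0) -> p = 0.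
Proof.
move=> H; apply: tester_sep => W s x ps px.
have E1 : comp (par p (idd W)) s = par p s.
  by rewrite -{1}(par_idl s) (Defs.interchange p (idd [::]) (idd W) s) comp_idl comp_idr.
have E2 : par p s = comp (par (idd A) s) (par p (idd [::])).
  by rewrite Defs.interchange comp_idl comp_idr.
rewrite E1 E2 Defs.compA par_idr.
have -> : esym (cats0 [::]) = erefl [::] :> ([::] = [::] :> seq (Atom G)).
  by apply: proof_irrelevance.
rewrite comp_cast_st; apply: H.
apply: proc_cast; apply: proc_comp => //; apply: proc_par => //; exact: proc_id.
Qed.

Lemma ps_inv As (ps : L [::] (flatten As)) : prod_state R G As ps ->
  match As return L [::] (flatten As) -> Prop with
  | [::] => fun v => v = idd [::]
  | [:: A] => fun v => exists p, state p /\ v = par p (idd [::])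
  | _ => fun _ => True end ps.
Proof.
elim=> [|A As' p v hp hv IH] //=.
case: As' v hv IH => [|A' As''] v hv IH //=.
by exists p; rewrite IH.
Qed.

Lemma pe_inv Bs (es : L (flatten Bs) [::]) : prod_effect R G Bs es ->
  match Bs return L (flatten Bs) [::] -> Prop with
  | [::] => fun v => v = idd [::]
  | [:: B] => fun v => exists e, effect e /\ v = par e (idd [::])
  | _ => fun _ => True end es.
Proof.
elim=> [|B Bs' e v he hv IH] //=.
case: Bs' v hv IH => [|B' Bs''] v hv IH //=.
by exists e; rewrite IH.
Qed.

Lemma TL1 (TL : tomographically_local G) A B (f g : L A B) :
  (forall p e, state p -> effect e -> tor (comp e (comp f p)) = tor (comp e (comp g p))) ->
  f = g.
Proof.
move=> H.
have := TL [:: A] [:: B] (par f (idd [::])) (par g (idd [::])).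
move=> H2; apply: (@castLin_inj _ _ _ _ (esym (cats0 A)) (esym (cats0 B))); rewrite -!par_idr; apply: H2 => ps es hps hes.

have [p [sp ->]] := ps_inv hps.
have [e [ee ->]] := pe_inv hes.
rewrite (Defs.interchange f p (idd [::]) (idd [::])) (Defs.interchange g p (idd [::]) (idd [::])) !comp_idl.
rewrite (Defs.interchange e (comp f p) (idd [::]) (idd [::])) (Defs.interchange e (comp g p) (idd [::]) (idd [::])).
by rewrite (tor_inj (H p e sp ee)).
Qed.

Lemma tup_span (V : vectType R) n (P : n.-tuple V) v :
  (v \in <<P>>)%VS -> v = \sum_(i < n) coord P i v *: tnth P i.
Proof.
move=> /coord_span {1}->; apply: eq_bigr => i _; by rewrite (tnth_nth 0).
Qed.

Lemma proc_span_all B C : exists S : seq (L B C),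
  (forall x, x \in S -> gpt_proc G x) /\ (forall v, (v \in <<S>>)%VS).
Proof.
have H : forall l : seq (L B C), exists S : seq (L B C),
    (forall x, x \in S -> gpt_proc G x) /\ {subset l <= <<S>>%VS}.
  elim=> [|v l [S0 [h0 s0]]]; first by exists [::].
  have [s [hs vs]] := proc_span v.
  exists (s ++ S0); split.
    by move=> x; rewrite mem_cat => /orP[/hs|/h0].
  move=> y; rewrite inE => /orP[/eqP->|/s0 yl].
    apply: subv_trans vs _; apply: sub_span => z zs; by rewrite mem_cat zs.
  apply: subv_trans yl _; apply: sub_span => z zs; by rewrite mem_cat zs orbT.
have [S [hS sS]] := H (vbasis fullv).
exists S; split => // v.
have : (v \in fullv)%VS by exact: memvf.
rewrite -(span_basis (vbasisP fullv)) => hv.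
apply: subv_trans hv _; exact/span_subvP.
Qed.

Lemma extract_free (V : vectType R) (S : seq V) : exists S' : seq V,
  {subset S' <= S} /\ free S' /\ <<S'>>%VS = <<S>>%VS.
Proof.
elim: S => [|x S [S' [sub [fr sp]]]]; first by exists [::]; rewrite nil_free.
case: (boolP (x \in <<S'>>%VS)) => hx.
  exists S'; split; first by move=> y /sub yS; rewrite inE yS orbT.
  split => //; rewrite span_cons -sp; apply/esym/addv_idPr; exact: hx.
exists (x :: S'); split.
  by move=> y; rewrite !inE => /orP[->|/sub ->]; rewrite ?orbT.
by rewrite free_cons hx fr span_cons sp span_cons.
Qed.

Lemma exists_basis B C : exists n (P : n.-tuple (L B C)),
  (forall j, gpt_proc G (tnth P j)) /\ free P /\ (forall v, (v \in <<P>>)%VS).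
Proof.
have [S [hS sS]] := proc_span_all B C.
have [S' [sub [fr sp]]] := extract_free S.
exists (size S'), (in_tuple S'); split; last split => //.
  by move=> j; apply: hS; apply: sub; exact: mem_tnth.
by move=> v; rewrite /= sp.
Qed.

Definition Nm A n m (P : n.-tuple (L [::] A)) (E : m.-tuple (L A [::])) : 'M[R]_(m, n) :=
  \matrix_(k < m, l < n) tor (comp (tnth E k) (tnth P l)).

Lemma Nm_row_free A n m (P : n.-tuple (L [::] A)) (E : m.-tuple (L A [::])) :
  (forall p, state p -> (p \in <<P>>)%VS) -> free E -> row_free (Nm P E).
Proof.
move=> sP fE; apply: inj_row_free => v hv.
pose e := \sum_(k < m) v 0 k *: tnth E k.
have e0 : e = 0.
  have el : forall l, tor (comp e (tnth P l)) = 0.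
    move=> l; rewrite /e comp_suml tor_sum.
    apply: etrans (_ : _ = (v *m Nm P E) 0 l) _; last by rewrite hv mxE.
    by rewrite mxE; apply: eq_bigr => k _; rewrite compZl torZ mxE.
  apply: eff_nondeg => p /sP /tup_span ->.
  rewrite comp_sumr tor_sum big1 // => l _.
  by rewrite compZr torZ el mulr0.
apply/rowP => k; rewrite mxE.
move/freeP: fE => /(_ (fun k => v 0 k)) -> //.
rewrite -[RHS]e0; apply: eq_bigr => i _; by rewrite (tnth_nth 0).
Qed.

Lemma Nm_col_free A n m (P : n.-tuple (L [::] A)) (E : m.-tuple (L A [::])) :
  (forall e, effect e -> (e \in <<E>>)%VS) -> free P -> row_free (Nm P E)^T.
Proof.
move=> sE fP; apply: inj_row_free => w hw.
pose p := \sum_(l < n) w 0 l *: tnth P l.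
have p0 : p = 0.
  have pk : forall k, tor (comp (tnth E k) p) = 0.
    move=> k; rewrite /p comp_sumr tor_sum.
    apply: etrans (_ : _ = (w *m (Nm P E)^T) 0 k) _; last by rewrite hw mxE.
    by rewrite mxE; apply: eq_bigr => l _; rewrite compZr torZ !mxE.
  apply: st_nondeg => e /sE /tup_span ->.
  rewrite comp_suml tor_sum big1 // => k _.
  by rewrite compZl torZ pk mulr0.
apply/rowP => l; rewrite mxE.
move/freeP: fP => /(_ (fun l => w 0 l)) -> //.
rewrite -[RHS]p0; apply: eq_bigr => i _; by rewrite (tnth_nth 0).
Qed.

Lemma basis_size A n m (P : n.-tuple (L [::] A)) (E : m.-tuple (L A [::])) :
  states_basis P -> effects_basis E -> m = n.
Proof.
move=> [_ [fP sP]] [_ [fE sE]].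
have h1 := Nm_row_free sP fE; have h2 := Nm_col_free sE fP.
apply/eqP; rewrite eqn_leq; apply/andP; split.
  by move: h1; rewrite /row_free => /eqP <-; exact: rank_leq_col.
by move: h2; rewrite /row_free mxrank_tr => /eqP <-; exact: rank_leq_row.
Qed.

Lemma Nmx_unit A n (P : n.-tuple (L [::] A)) (E : n.-tuple (L A [::])) :
  states_basis P -> effects_basis E -> Nmx P E \in unitmx.
Proof.
move=> [_ [fP sP]] [_ [fE sE]].
by rewrite -row_free_unit; exact: (Nm_row_free sP fE).
Qed.

Lemma bil A B (X Y : L A B) n m (P : n.-tuple (L [::] A)) (E : m.-tuple (L B [::])) p e :
  (forall k l, tor (comp (tnth E k) (comp X (tnth P l))) =
               tor (comp (tnth E k) (comp Y (tnth P l)))) ->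
  (p \in <<P>>)%VS -> (e \in <<E>>)%VS ->
  tor (comp e (comp X p)) = tor (comp e (comp Y p)).
Proof.
move=> H /tup_span -> /tup_span ->.
rewrite !comp_suml !tor_sum; apply: eq_bigr => k _; rewrite !compZl !torZ; congr (_ * _).
rewrite !comp_sumr !tor_sum; apply: eq_bigr => l _; rewrite (compZr _ X) (compZr _ Y) !compZr !torZ; congr (_ * _).
exact: H.
Qed.

Definition decomp (X : seq (Atom G)) (r : seq (R * L [::] X * L X [::])) :=
  idd X = \sum_(t <- r) t.1.1 *: comp t.1.2 t.2.

Lemma comb (X Y : seq (Atom G)) (rX : seq (R * L [::] X * L X [::])) (rY : seq (R * L [::] Y * L Y [::])) : decomp rX -> decomp rY ->
  decomp [seq (a.1.1 * b.1.1, par a.1.2 b.1.2, par a.2 b.2) | a <- rX, b <- rY].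
Proof.
rewrite /decomp => hX hY.
rewrite big_allpairs_dep /=.
rewrite -par_id hX hY par_suml; apply: eq_bigr => a _.
rewrite par_sumr; apply: eq_bigr => b _.
rewrite parZl parZr scalerA; congr (_ *: _).
by rewrite (Defs.interchange a.1.2 a.2 b.1.2 b.2).
Qed.

Lemma expand (X Y : seq (Atom G)) (h : L X Y) (rX : seq (R * L [::] X * L X [::])) (rY : seq (R * L [::] Y * L Y [::])) : decomp rX -> decomp rY ->
  h = \sum_(u <- rY) u.1.1 *: comp u.1.2
        (\sum_(t <- rX) t.1.1 *: comp (comp u.2 (comp h t.1.2)) t.2).
Proof.
rewrite /decomp => hX hY.
transitivity (comp (idd Y) (comp h (idd X))); first by rewrite comp_idl comp_idr.
rewrite hX hY comp_suml; apply: eq_bigr => u _.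
rewrite compZl; congr (_ *: _).
rewrite -Defs.compA; congr (comp _ _).
rewrite !comp_sumr; apply: eq_bigr => t _.
by rewrite !compZr !Defs.compA.
Qed.

Lemma dec_all
  (H : forall (A : seq (Atom G)) (n : nat)
          (P : n.-tuple (Lin G [::] A)) (E : n.-tuple (Lin G A [::])),
      states_basis P -> effects_basis E ->
      Nmx P E \in unitmx /\
      gpt_id G A = \sum_(i < n) \sum_(j < n)
                  (invmx (Nmx P E)) j i *: gpt_comp G (tnth P j) (tnth E i))
  (As : seq (seq (Atom G))) :
  exists r : seq (R * L [::] (flatten As) * L (flatten As) [::]),
    (forall t, t \in r -> prod_state R G As t.1.2 /\ prod_effect R G As t.2) /\ decomp r.
Proof.
elim: As => [|A As [r0 [h0 d0]]].
  exists [:: (1, idd [::], idd [::])]; split.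
    move=> t; rewrite inE => /eqP -> /=; split; [exact: ps_nil | exact: pe_nil].
  by rewrite /decomp big_seq1 scale1r comp_idl.
have [n [P [hP [fP sP]]]] := exists_basis [::] A.
have [m [E [hE [fE sE]]]] := exists_basis A [::].
have bP : states_basis P by split=> //; split=> // p _; exact: sP.
have bE : effects_basis E by split=> //; split=> // p _; exact: sE.
have emn := basis_size bP bE; subst m.
have [_ hid] := H A n P E bP bE.
pose rA := [seq (invmx (Nmx P E) j i, tnth P j, tnth E i) | i <- index_enum 'I_n, j <- index_enum 'I_n].
have dA : decomp rA by rewrite /decomp big_allpairs_dep /=.
exists [seq (a.1.1 * b.1.1, par a.1.2 b.1.2, par a.2 b.2) | a <- rA, b <- r0]; split; last exact: comb dA d0.
move=> t /allpairsP [[a b] /= [ha hb ->]] /=.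
move: ha; rewrite /rA => /allpairsP [[i j] /= [_ _ ->]] /=.
have [h1 h2] := h0 b hb.
split; [apply: ps_cons => //; exact: hP | apply: pe_cons => //; exact: hE].
Qed.
End Aux.

Theorem lemma2 (R : realType) (G : GPT R) :
  tomographically_local G <->
  (forall (A : seq (Atom G)) (n : nat)
          (P : n.-tuple (Lin G [::] A)) (E : n.-tuple (Lin G A [::])),
      states_basis P -> effects_basis E ->
      Nmx P E \in unitmx /\
      gpt_id G A = \sum_(i < n) \sum_(j < n)
                  (invmx (Nmx P E)) j i *: gpt_comp G (tnth P j) (tnth E i)).
Proof.
split.
- move=> TL A n P E bP bE; split; first exact: Nmx_unit.
  apply: TL1 => // p e sp ee.
  have uN := Nmx_unit bP bE.
  case: bP => [_ [_ sP]]; case: bE => [_ [_ sE]].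
  apply: (bil (P:=P) (E:=E)); [| exact: sP | exact: sE].
  move=> k l; rewrite comp_idl.
  set N := Nmx P E.
  have -> : gpt_comp G (\sum_(i < n) \sum_(j < n) invmx N j i *: gpt_comp G (tnth P j) (tnth E i)) (tnth P l)
      = \sum_(i < n) \sum_(j < n) invmx N j i *: gpt_comp G (tnth P j) (gpt_comp G (tnth E i) (tnth P l)).
    rewrite comp_suml; apply: eq_bigr => i _; rewrite comp_suml; apply: eq_bigr => j _.
    by rewrite compZl -Defs.compA.
  rewrite comp_sumr tor_sum.
  transitivity (\sum_(i < n) \sum_(j < n) invmx N j i * (N k j * N i l)); last first.
    apply: eq_bigr => i _; rewrite comp_sumr tor_sum; apply: eq_bigr => j _.
    by rewrite compZr torZ Defs.compA tor_comp !mxE.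
  transitivity (((N *m invmx N) *m N) k l); first by rewrite mulmxV // mul1mx mxE.
  rewrite mxE; apply: eq_bigr => i _; rewrite mxE mulr_suml; apply: eq_bigr => j _.
  by rewrite [RHS]mulrA [invmx N j i * _]mulrC.
- move=> H As Bs f g Hfg.
  have [rA [hA dA]] := dec_all H As; have [rB [hB dB]] := dec_all H Bs.
  rewrite (expand f dA dB) (expand g dA dB).
  apply: eq_big_seq => u hu; congr (_ *: _); congr (gpt_comp G _ _).
  apply: eq_big_seq => t ht; congr (_ *: _); congr (gpt_comp G _ _).
  apply: tor_inj; apply: Hfg; [exact: (hA t ht).1 | exact: (hB u hu).2].
Qed.
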